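(* Let $P$ be a finite partial IP loop such that $3\mid o_3(P)$, $\#P\equiv 4\pmod 6$ and $\Gamma(P)\subseteq O_2(P)\times O_2(P)$, and let $G(P)$ be its gap graph. Then (a) every vertex of $G(P)$ has even degree, and (b) the number of edges of $G(P)$ is divisible by $3$.
   Context: A partial IP loop is a set $P$ with a partial binary operation $(x,y)\mapsto xy$ defined on a subset $D(P)\subseteq P\times P$ (the domain) such that: (1) there is $1\in P$ with $(1,x),(x,1)\in D(P)$ and $1x=x1=x$ for all $x\in P$; (2) for each $x\in P$ there is a unique $y\in P$, denoted $x^{-1}$, with $(x,y),(y,x)\in D(P)$ and $xy=yx=1$; (3) whenever $(x,y)\in D(P)$, we have $(x^{-1},xy),(xy,y^{-1})\in D(P)$ and $x^{-1}(xy)=y$, $(xy)y^{-1}=x$. The set of gaps is $\Gamma(P)=(P\times P)\setminus D(P)$. $O_2(P)=\{x\in P: (x,x)\in D(P),\ x\ne 1,\ xx=1\}$; $O_3(P)=\{x\in P: (x,x)\in D(P),\ (x,xx)\in D(P),\ x\neq 1,\ x(xx)=1\}$ and $o_3(P)=\#O_3(P)$. When $\Gamma(P)\subseteq O_2(P)\times O_2(P)$ (so $\Gamma(P)$ is irreflexive and symmetric), the gap graph $G(P)$ is the simple undirected graph whose vertices are the $x\in O_2(P)$ with $(x,y)\in\Gamma(P)$ for some $y$, and whose edges are the sets $\{x,y\}$ with $(x,y)\in\Gamma(P)$. *)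

(* Defs.v *)
(* A partial binary operation on a finite carrier T is
   encoded as mul : T -> T -> option T; (x,y) is in the domain D(P)
   iff mul x y <> None, and then xy is the value. *)
From mathcomp Require Import all_boot.
Set Implicit Arguments. Unset Strict Implicit. Unset Printing Implicit Defensive.

Section PartialIPLoop.
Variable T : finType.
Variable mul : T -> T -> option T.
Variable e : T.

Definition is_inv (x y : T) : Prop := mul x y = Some e /\ mul y x = Some e.

Definition partial_IP_loop : Prop :=
  (forall x, mul e x = Some x /\ mul x e = Some x) /\
  (forall x, exists! y, is_inv x y) /\
  (forall x y z xi yi, mul x y = Some z -> is_inv x xi -> is_inv y yi ->
     mul xi z = Some y /\ mul z yi = Some x).

Definition gap (x y : T) : bool := mul x y == None.

Definition O2 : {set T} := [set x | (mul x x == Some e) && (x != e)].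

Definition O3 : {set T} :=
  [set x | (if mul x x is Some s then mul x s == Some e else false) && (x != e)].

Definition o3 : nat := #|O3|.

Definition gap_vertices : {set T} := [set x in O2 | [exists y, gap x y]].
Definition gap_edges : {set {set T}} :=
  [set [set p.1; p.2] | p in [set p : T * T | gap p.1 p.2]].
Definition gap_degree (x : T) : nat := #|[set E in gap_edges | x \in E]|.

End PartialIPLoop.

(* Main.v *)
Require Import Defs.
From mathcomp Require Import all_boot.
From mathcomp Require Import zify.
Set Implicit Arguments. Unset Strict Implicit. Unset Printing Implicit Defensive.


Lemma card_inv2 (U : finType) (f : U -> U) (A : {set U}) :
  (forall a, a \in A -> f a \in A) ->
  (forall a, a \in A -> f (f a) = a) ->
  (forall a, a \in A -> f a != a) -> ~~ odd #|A|.
Proof.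
move: {2}#|A| (leqnn #|A|) => n; elim: n A => [|n IH] A.
  by rewrite leqn0 => /eqP ->.
move=> Hn Hcl Hinv Hfix.
case: (set_0Vmem A) => [-> | [a Ha]]; first by rewrite cards0.
set S := [set a; f a].
have sub : S \subset A.
  by apply/subsetP=> b; rewrite !inE => /orP[]/eqP->; [done | exact: Hcl].
have cS : #|S| = 2 by rewrite /S cards2 eq_sym (Hfix a Ha).
have cA := cardsID S A; rewrite (setIidPr sub) cS in cA.
set B := A :\: S in cA *.
have HB : forall b, b \in B -> [/\ b \in A, b != a & b != f a].
  by move=> b; rewrite !inE negb_or => /andP[/andP[? ?] ?].
have oB : ~~ odd #|B|.
  apply: IH; first by lia.
  - move=> b /HB [bA ba bfa]; rewrite !inE negb_or Hcl // andbT; apply/andP; split.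
      by apply: contra bfa => /eqP <-; rewrite Hinv.
    by apply: contra ba => /eqP/(congr1 f); rewrite !Hinv // => ->.
  - by move=> b /HB [bA _ _]; apply: Hinv.
  - by move=> b /HB [bA _ _]; apply: Hfix.
by rewrite -cA oddD /= oB.
Qed.

Lemma card_inv3 (U : finType) (f : U -> U) (A : {set U}) :
  (forall a, a \in A -> f a \in A) ->
  (forall a, a \in A -> f (f (f a)) = a) ->
  (forall a, a \in A -> f a != a) -> (3 %| #|A|)%N.
Proof.
move: {2}#|A| (leqnn #|A|) => n; elim: n A => [|n IH] A.
  by rewrite leqn0 => /eqP ->.
move=> Hn Hcl Hinv Hfix.
case: (set_0Vmem A) => [-> | [a Ha]]; first by rewrite cards0.
have Hfa := Hcl _ Ha; have Hffa := Hcl _ Hfa.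
have n1 : f a != a := Hfix a Ha.
have n2 : f (f a) != a.
  apply: contra n1 => /eqP E; by rewrite -{1}E Hinv.
have n3 : f (f a) != f a := Hfix _ Hfa.
set S := [set a; f a; f (f a)].
have sub : S \subset A.
  by apply/subsetP=> b; rewrite !inE => /orP[/orP[]|]/eqP->.
have cS : #|S| = 3.
  rewrite /S -setUA cardsU1 cards2 !inE negb_or eq_sym n1 eq_sym n2 /=.
  by rewrite eq_sym n3.
have cA := cardsID S A; rewrite (setIidPr sub) cS in cA.
set B := A :\: S in cA *.
have HB : forall b, b \in B -> [/\ b \in A, b != a, b != f a & b != f (f a)].
  by move=> b; rewrite !inE !negb_or => /andP[/andP[/andP[? ?] ?] ?].
have oB : (3 %| #|B|)%N.
  apply: IH; first by lia.
  - move=> b /HB [bA ba bfa bffa]; rewrite !inE !negb_or Hcl // andbT.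
    apply/andP; split; first (apply/andP; split).
    + by apply: contra bffa => /eqP <-; rewrite Hinv.
    + by apply: contra ba => /eqP/(congr1 (fun x => f (f x))); rewrite !Hinv // => <-.
    + by apply: contra bfa => /eqP/(congr1 (fun x => f (f x))); rewrite !Hinv // => <-.
  - by move=> b /HB [bA _ _ _]; apply: Hinv.
  - by move=> b /HB [bA _ _ _]; apply: Hfix.
by rewrite -cA dvdn_addr.
Qed.


Definition pinv (T : finType) (mul : T -> T -> option T) (e x : T) : T :=
  odflt e [pick y | (mul x y == Some e) && (mul y x == Some e)].

Lemma inv_spec (T : finType) (mul : T -> T -> option T) (e : T) :
  partial_IP_loop mul e -> forall x, is_inv mul e x (pinv mul e x).
Proof.
move=> [_ [Hi _]] x; rewrite /pinv; case: pickP => [y /andP[/eqP ? /eqP ?]|] //=.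
move=> H; case: (Hi x) => y [[h1 h2] _]; move: (H y); by rewrite h1 h2 !eqxx.
Qed.

Lemma inv_uniq (T : finType) (mul : T -> T -> option T) (e : T) :
  partial_IP_loop mul e -> forall x y, is_inv mul e x y -> y = pinv mul e x.
Proof.
move=> HP x y H; have := inv_spec HP x; case: HP => [_ [Hi _]].
case: (Hi x) => w [_ U] H2; by rewrite -(U _ H) -(U _ H2).
Qed.

Lemma inv_inv (T : finType) (mul : T -> T -> option T) (e : T) :
  partial_IP_loop mul e -> forall x, pinv mul e (pinv mul e x) = x.
Proof.
move=> HP x; have [h1 h2] := inv_spec HP x.
by rewrite -(inv_uniq HP (conj h2 h1)).
Qed.

Lemma L1 (T : finType) (mul : T -> T -> option T) (e : T) :
  partial_IP_loop mul e -> forall x y z, mul x y = Some z ->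
  mul (pinv mul e x) z = Some y /\ mul z (pinv mul e y) = Some x.
Proof.
move=> HP x y z H; have := HP => [[_ [_ H3]]].
exact: H3 _ _ _ _ _ H (inv_spec HP x) (inv_spec HP y).
Qed.

Lemma L2 (T : finType) (mul : T -> T -> option T) (e : T) :
  partial_IP_loop mul e -> forall x y z, mul x y = Some z ->
  mul y (pinv mul e z) = Some (pinv mul e x).
Proof.
move=> HP x y z H; have [A _] := L1 HP H; exact: (L1 HP A).2.
Qed.

Lemma L3 (T : finType) (mul : T -> T -> option T) (e : T) :
  partial_IP_loop mul e -> forall x y z, mul x y = Some z ->
  mul (pinv mul e y) (pinv mul e x) = Some (pinv mul e z).
Proof.
move=> HP x y z H; exact: (L1 HP (L2 HP H)).1.
Qed.

Lemma L4 (T : finType) (mul : T -> T -> option T) (e : T) :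
  partial_IP_loop mul e -> forall x y z, mul x y = Some z ->
  mul (pinv mul e z) x = Some (pinv mul e y).
Proof.
move=> HP x y z H; have := L2 HP (L2 HP H); by rewrite inv_inv.
Qed.

Lemma inv_O2 (T : finType) (mul : T -> T -> option T) (e : T) :
  partial_IP_loop mul e -> forall x, x \in O2 mul e -> pinv mul e x = x.
Proof.
move=> HP x; rewrite inE => /andP[/eqP h _]; by rewrite -(inv_uniq HP (conj h h)).
Qed.


Lemma gap_sym (T : finType) (mul : T -> T -> option T) (e : T) :
  partial_IP_loop mul e ->
  (forall x y, gap mul x y -> (x \in O2 mul e) && (y \in O2 mul e)) ->
  forall x y, gap mul x y -> gap mul y x.
Proof.
move=> HP Hg x y gxy; have /andP[ox oy] := Hg _ _ gxy.
move: gxy; rewrite /gap; case E: (mul y x) => [z|] //.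
by rewrite -(inv_O2 HP ox) -(inv_O2 HP oy) (L3 HP E).
Qed.

Lemma gap_irr (T : finType) (mul : T -> T -> option T) (e : T) :
  (forall x y, gap mul x y -> (x \in O2 mul e) && (y \in O2 mul e)) ->
  forall x, ~~ gap mul x x.
Proof.
move=> Hg x; apply/negP=> g; have /andP[ox _] := Hg _ _ g.
move: ox g; rewrite inE /gap => /andP[/eqP -> _].
by [].
Qed.

Lemma part_a (T : finType) (mul : T -> T -> option T) (e : T) :
  partial_IP_loop mul e ->
  (#|T| %% 6 = 4)%N ->
  (forall x y, gap mul x y -> (x \in O2 mul e) && (y \in O2 mul e)) ->
  forall x, x \in gap_vertices mul e -> ~~ odd (gap_degree mul x).
Proof.
move=> HP HT Hg x; rewrite inE => /andP[ox _].
have ix := inv_O2 HP ox.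
have xe : x != e by move: ox; rewrite inE => /andP[].
set N := [set y | gap mul x y].
have -> : gap_degree mul x = #|N|.
  rewrite /gap_degree.
  have -> : [set E in gap_edges mul | x \in E] = (fun y => [set x; y]) @: N.
    apply/setP=> E; rewrite inE; apply/andP/imsetP.
    - case=> /imsetP [[a b]]; rewrite inE /= => gab -> /set2P [] xa.
        exists b; first by rewrite inE xa.
        by rewrite xa.
      exists a; first by rewrite inE xa (gap_sym HP Hg).
      by rewrite xa setUC.
    - case=> y; rewrite inE => gxy ->; split; last by rewrite !inE eqxx.
      apply/imsetP; exists (x, y); first by rewrite inE.
      by [].
  rewrite card_imset // => y1 y2 /setP H.
  have h1 := H y1; have h2 := H y2; rewrite !inE eqxx orbT in h1 h2.
  move: h1 h2; case: (eqVneq y1 y2) => // ne.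
  by rewrite !orbF eqxx orbT => /esym/eqP -> /eqP ->.
have cT : #|N| + #|~: N| = #|T| := cardsC N.
set f := fun y => if mul x y is Some z then z else y.
have Hev : ~~ odd #|~: N|.
  apply: (card_inv2 (f := f)).
  - move=> a; rewrite !inE /gap /f; case E: (mul x a) => [z|] //= _.
    by have [h _] := L1 HP E; rewrite ix in h; rewrite h.
  - move=> a; rewrite !inE /gap /f; case E: (mul x a) => [z|] //= _.
    by have [h _] := L1 HP E; rewrite ix in h; rewrite h.
  - move=> a; rewrite !inE /gap /f; case E: (mul x a) => [z|] //= _.
    apply/eqP=> za; subst z; have [_ h] := L1 HP E.
    have [h1 _] := inv_spec HP a; rewrite h1 in h; case: h => h.
    by rewrite h eqxx in xe.
have oT : ~~ odd #|T|.
  by rewrite (divn_eq #|T| 6) HT oddD oddM andbF.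
by move: oT Hev; rewrite -cT oddD; case: (odd #|N|); case: (odd #|~: N|).
Qed.


Definition sgm (T : finType) (mul : T -> T -> option T) (e : T) (p : T * T) :=
  if mul p.1 p.2 is Some z then (p.2, pinv mul e z) else p.

Lemma part_b (T : finType) (mul : T -> T -> option T) (e : T) :
  partial_IP_loop mul e ->
  (3 %| o3 mul e)%N ->
  (#|T| %% 6 = 4)%N ->
  (forall x y, gap mul x y -> (x \in O2 mul e) && (y \in O2 mul e)) ->
  (3 %| #|gap_edges mul|)%N.
Proof.
move=> HP H3 HT Hg.
set D := [set p : T * T | mul p.1 p.2 != None].
set s := sgm mul e.
have sD : forall p, p \in D -> s p \in D /\ s (s (s p)) = p.
  move=> [x y]; rewrite inE /= /s /sgm /=; case E: (mul x y) => [z|] //= _.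
  rewrite inE /= (L2 HP E) /=; split => //.
  by rewrite inv_inv // (L4 HP E) /= inv_inv.
set F := [set p in D | s p == p].
set A := D :\: F.
have cA : (3 %| #|A|)%N.
  apply: (card_inv3 (f := s)).
  - move=> a /setDP [aD nF]; have [sa ssa] := sD a aD.
    apply/setDP; split => //; rewrite inE sa /=; apply/eqP => E.
    apply: (negP nF); rewrite inE aD /=; apply/eqP.
    by rewrite -{2}ssa !E.
  - by move=> a /setDP [aD _]; have [] := sD a aD.
  - move=> a /setDP [aD nF]; apply/eqP => E; apply: (negP nF).
    by rewrite inE aD E eqxx.
have cD : #|D| = #|F| + #|A|.
  have := cardsID F D; rewrite (setIidPr _); first by move=> <-.
  by apply/subsetP => p; rewrite inE => /andP[].
set K := [set x | mul x x == Some (pinv mul e x)].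
have FK : F = (fun x => (x, x)) @: K.
  apply/setP => -[x y]; rewrite inE; apply/andP/imsetP.
  - rewrite inE /= /s /sgm /=; case E: (mul x y) => [z|]; last by case.
    case=> _ /eqP [yx zx].
    exists x; last by rewrite yx.
    by rewrite inE; subst y; rewrite E -zx inv_inv.
  - case=> w; rewrite inE => /eqP Ew [-> ->]; rewrite inE /= Ew /s /sgm /= Ew inv_inv //.
have cF : #|F| = 1 + o3 mul e.
  rewrite FK card_imset; last by move=> a b [].
  have -> : K = e |: O3 mul e.
    apply/setP => x; rewrite !inE.
    case: (eqVneq x e) => [-> | xe] /=.
      have [id1 _] := HP.1 e.
      by rewrite -(inv_uniq HP (conj id1 id1)) id1 eqxx.
    rewrite andbT; case E: (mul x x) => [z|] //=.
    apply/eqP/eqP.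
    - by case=> ->; exact (inv_spec HP x).1.
    - move=> h; have [h' _] := L1 HP h; have [_ id2] := HP.1 (pinv mul e x).
      by rewrite id2 in h'; case: h' => ->.
  rewrite cardsU1 /o3; have -> : e \notin O3 mul e by rewrite inE eqxx andbF.
  by [].
have cG : #|D| + #|~: D| = #|T| * #|T| by rewrite cardsC card_prod.
have GD : ~: D = [set p : T * T | gap mul p.1 p.2].
  by apply/setP => p; rewrite !inE /gap negbK.
have cE : #|[set p : T * T | gap mul p.1 p.2]| = #|gap_edges mul| * 2.
  rewrite -sum1_card (partition_big_imset (fun p : T * T => [set p.1; p.2])) /=.
  rewrite -sum_nat_const; apply: eq_bigr => E /imsetP [[a b]]; rewrite inE /= => gab ->.
  rewrite sum1dep_card.
  have ab : a != b.
    by apply/eqP => ab; subst b; rewrite (negbTE (gap_irr Hg a)) in gab.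
  have -> : [set x | (x \in [set p : T * T | gap mul p.1 p.2]) && ([set x.1; x.2] == [set a; b])] = [set (a, b); (b, a)].
    apply/setP => -[c d]; rewrite !inE /=.
    apply/andP/orP.
    + case=> gcd /eqP S.
      have hc : c \in [set a; b] by rewrite -S !inE eqxx.
      have hd : d \in [set a; b] by rewrite -S !inE eqxx orbT.
      have cd : c != d.
        by apply/eqP => cd; subst d; rewrite (negbTE (gap_irr Hg c)) in gcd.
      move: cd; move: hc hd; rewrite !inE => /orP[]/eqP-> /orP[]/eqP->;
        try (by rewrite eqxx); [by left | by right].
    + case=> /eqP [-> ->]; split.
      * by [].
      * by apply/eqP.
      * exact: (gap_sym HP Hg gab).
      * by apply/eqP; rewrite setUC.
  rewrite cards2.
  have -> : (a, b) != (b, a) by apply: contra ab => /eqP [-> _].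
  by [].
move: cA cD cF cG H3 HT; rewrite GD cE.
move: (#|gap_edges mul|) (#|D|) (#|F|) (#|A|) (o3 mul e) (#|T|) => n d f a o t.
move=> h1 h2 h3 h4 h5 h6.
have t3 : t %% 3 = 1 by lia.
have tt : (t * t) %% 3 = 1 by rewrite -modnMm t3.
lia.
Qed.

Theorem claim3 (T : finType) (mul : T -> T -> option T) (e : T) :
  partial_IP_loop mul e ->
  (3 %| o3 mul e)%N ->
  (#|T| %% 6 = 4)%N ->
  (forall x y, gap mul x y -> (x \in O2 mul e) && (y \in O2 mul e)) ->
  (forall x, x \in gap_vertices mul e -> ~~ odd (gap_degree mul x)) /\
  (3 %| #|gap_edges mul|)%N.
Proof.
move=> HP H3 HT Hg; split.
- exact: part_a HP HT Hg.
- exact: part_b HP H3 HT Hg.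
Qed.
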